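(* Consider the following perfect-information game between Learner, Reality and $N$ experts (Expert $1,\dots,$ Expert $N$). At each step $t=1,2,\dots$: each Expert $n$ ($n=1,\dots,N$) announces a prediction $\gamma_t^n\in[0,1]$, a number $\eta_t^n>0$, and a loss function $\lambda_t^n\in\mathcal{L}$ that is $\eta_t^n$-mixable; then Learner announces a prediction $\pi_t\in[0,1]$; then Reality announces an outcome $\omega_t\in\{0,1\}$. Learner has a strategy that guarantees that, for all $T\ge 1$ and all $n=1,\dots,N$, $$\sum_{t=1}^T \eta_t^n\bigl(\lambda_t^n(\pi_t,\omega_t)-\lambda_t^n(\gamma_t^n,\omega_t)\bigr)\le \ln N .$$
   Context: A loss function is a map $\lambda:[0,1]\times\{0,1\}\to[0,\infty]$ satisfying: (1) $\lambda(\gamma,0)$ and $\lambda(\gamma,1)$ are continuous in $\gamma\in[0,1]$ (with the standard topology on $[0,\infty]$); (2) there exists $\gamma\in[0,1]$ with $\lambda(\gamma,0)$ and $\lambda(\gamma,1)$ both finite; (3) there is no $\gamma\in[0,1]$ with $\lambda(\gamma,0)$ and $\lambda(\gamma,1)$ both infinite. The superprediction set of $\lambda$ is $\Sigma_\lambda=\{(x,y)\in[0,\infty)^2:\exists\gamma\in[0,1]\ \lambda(\gamma,0)\le x,\ \lambda(\gamma,1)\le y\}$. For $\eta>0$, $\lambda$ is $\eta$-mixable if the image of $\Sigma_\lambda$ under $(x,y)\mapsto(e^{-\eta x},e^{-\eta y})$ is convex; it is mixable if it is $\eta$-mixable for some $\eta>0$. $\lambda$ is proper (a proper scoring rule) if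 for all $\pi,\pi'\in[0,1]$: $\pi\lambda(\pi,1)+(1-\pi)\lambda(\pi,0)\le\pi\lambda(\pi',1)+(1-\pi)\lambda(\pi',0)$. $\mathcal{L}$ denotes the set of all loss functions that are both mixable and proper. *)

(* Defs.v *)
From HB Require Import structures.
From mathcomp Require Import all_boot all_order all_algebra.
From mathcomp Require Import all_classical all_reals all_analysis.
Set Implicit Arguments. Unset Strict Implicit. Unset Printing Implicit Defensive.
Import Order.TTheory GRing.Theory Num.Theory.
Local Open Scope ring_scope.
Local Open Scope classical_set_scope.

(* Outcomes {0,1} are encoded by bool: false = 0, true = 1.
   A (candidate) loss function is a map [0,1] x {0,1} -> [0,oo]; we take it as a
   map R -> bool -> \bar R and only constrain it on [0,1]. *)
Definition lossmap (R : realType) := R -> bool -> \bar R.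

Definition is_loss (R : realType) (lam : lossmap R) : Prop :=
  (forall g b, 0 <= g <= 1 -> (0 <= lam g b)%E) /\
  (forall b, {within `[0, 1], continuous (fun g => lam g b)}) /\
  (exists g, 0 <= g <= 1 /\ lam g false \is a fin_num /\ lam g true \is a fin_num) /\
  ~ (exists g, 0 <= g <= 1 /\ lam g false = +oo%E /\ lam g true = +oo%E).

Definition superpred (R : realType) (lam : lossmap R) : set (R * R) :=
  [set xy | 0 <= xy.1 /\ 0 <= xy.2 /\
     exists g, 0 <= g <= 1 /\ (lam g false <= xy.1%:E)%E /\ (lam g true <= xy.2%:E)%E].

Definition exp_image (R : realType) (eta : R) (A : set (R * R)) : set (R * R) :=
  (fun xy => (expR (- (eta * xy.1)), expR (- (eta * xy.2)))) @` A.

Definition convex_set2 (R : realType) (A : set (R * R)) : Prop :=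
  forall p q a, A p -> A q -> 0 <= a <= 1 ->
    A (a * p.1 + (1 - a) * q.1, a * p.2 + (1 - a) * q.2).

Definition eta_mixable (R : realType) (eta : R) (lam : lossmap R) : Prop :=
  convex_set2 (exp_image eta (superpred lam)).

Definition mixable (R : realType) (lam : lossmap R) : Prop :=
  exists eta : R, 0 < eta /\ eta_mixable eta lam.

(* proper scoring rule (uses the convention 0 * oo = 0 of \bar R) *)
Definition proper (R : realType) (lam : lossmap R) : Prop :=
  forall p p' : R, 0 <= p <= 1 -> 0 <= p' <= 1 ->
    (p%:E * lam p true + (1 - p)%:E * lam p false
     <= p%:E * lam p' true + (1 - p)%:E * lam p' false)%E.

Definition in_L (R : realType) (lam : lossmap R) : Prop :=
  is_loss lam /\ mixable lam /\ proper lam.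

(* a move of one expert: (prediction gamma, eta, loss function) *)
Definition expert_move (R : realType) := (R * R * lossmap R)%type.

Definition experts_move (R : realType) (N : nat) := ('I_N -> expert_move R)%type.

(* A Learner strategy maps the history of previous rounds (experts' moves and
   Reality's outcome, in order) and the current experts' moves to a prediction.
   (Learner's own past predictions are determined by the strategy.) *)
Definition strategy (R : realType) (N : nat) :=
  (seq (experts_move R N * bool) -> experts_move R N -> R)%type.

(* Main.v *)
Require Import Defs.
From HB Require Import structures.
From mathcomp Require Import all_boot all_order all_algebra.
From mathcomp Require Import all_classical all_reals all_analysis.
From mathcomp Require Import ring lra.
Set Implicit Arguments. Unset Strict Implicit.
Import Order.TTheory GRing.Theory Num.Theory.
Import numFieldNormedType.Exports.
Local Open Scope ring_scope.
Local Open Scope classical_set_scope.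
Lemma term_bound (R : realFieldType) (a s : R) : 0 < a -> a <= 1/2 -> -1 < s ->
  s - 2 * a * s ^+ 2 <= s / (1 + a * s).
Proof.
move=> a0 a12 s1.
have h : 0 < 1 + a * s by nra.
rewrite ler_pdivlMr //.
have : 0 <= a * s ^+ 2 * (1 + 2 * a * s) by apply: mulr_ge0; nra.
nra.
Qed.

Lemma alg_lemma (R : realFieldType) (p s0 s1 : R) : 0 <= p -> p <= 1 -> -1 < s0 -> -1 < s1 ->
  (forall a, 0 < a -> a <= 1/2 ->
     p * (a * s1 / (1 + a * s1)) + (1 - p) * (a * s0 / (1 + a * s0)) <= 0) ->
  p * s1 + (1 - p) * s0 <= 0.
Proof.
move=> p0 p1 hs0 hs1 H.
rewrite leNgt; apply/negP => d0.
set d := p * s1 + (1 - p) * s0 in d0.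
set K := s0 ^+ 2 + s1 ^+ 2 + 1.
have K0 : 0 < K by rewrite /K; nra.
set a := Order.min (1/2 : R) (d / (4 * K)).
have a0 : 0 < a by rewrite /a lt_min; apply/andP; split; [lra|apply: divr_gt0 => //; lra].
have a12 : a <= 1/2 by rewrite /a ge_min lexx.
have adk : a <= d / (4 * K) by rewrite /a ge_min lexx orbT.
have adk' : a * (4 * K) <= d by rewrite -ler_pdivlMr //; lra.
have := H a a0 a12.
have -> : p * (a * s1 / (1 + a * s1)) + (1 - p) * (a * s0 / (1 + a * s0)) =
  a * (p * (s1 / (1 + a * s1)) + (1 - p) * (s0 / (1 + a * s0))) by ring.
rewrite pmulr_rle0 // => Hb.
have t1 := term_bound a0 a12 hs1.
have t0 := term_bound a0 a12 hs0.
have e1 : p * (s1 - 2 * a * s1 ^+ 2) <= p * (s1 / (1 + a * s1)) by apply: ler_wpM2l.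
have e0 : (1 - p) * (s0 - 2 * a * s0 ^+ 2) <= (1 - p) * (s0 / (1 + a * s0)) by apply: ler_wpM2l; lra.
have q1 : 0 <= p * s1 ^+ 2 <= s1 ^+ 2 by apply/andP; split; nra.
have q0 : 0 <= (1-p) * s0 ^+ 2 <= s0 ^+ 2 by apply/andP; split; nra.
have f1 : d <= 2 * a * (p * s1 ^+ 2 + (1 - p) * s0 ^+ 2).
  rewrite /d; move: e1 e0 Hb; set X1 := _ / _; set X0 := _ / _ => e1 e0 Hb.
  have -> : 2 * a * (p * s1 ^+ 2 + (1 - p) * s0 ^+ 2) =
     (p * s1 + (1 - p) * s0) - (p * (s1 - 2 * a * s1 ^+ 2) + (1 - p) * (s0 - 2 * a * s0 ^+ 2)) by ring.
  lra.
have f2 : a * (p * s1 ^+ 2 + (1 - p) * s0 ^+ 2) <= a * K.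
  apply: ler_wpM2l; first lra. rewrite /K. case/andP: q1 => _ ?; case/andP: q0 => _ ?; lra.
have : 2 * a * K <= d / 2 by move: adk'; rewrite mulrC; lra.
move: f1 f2 d0; rewrite -mulrA; lra.
Qed.

Lemma step_b (R : realType) (eta P x y a : R) : 0 < a -> a <= 1/2 ->
  expR (- (eta * y)) = a * expR (- (eta * x)) + (1 - a) * expR (- (eta * P)) ->
  a * (expR (eta * (P - x)) - 1) / (1 + a * (expR (eta * (P - x)) - 1)) <= eta * (P - y).
Proof.
move=> a0 a12 Ey.
set s := expR (eta * (P - x)) - 1.
have hs : -1 < s by rewrite /s; have := expR_gt0 (eta * (P - x)); lra.
have h1 : 0 < 1 + a * s by nra.
have Hu : expR (- (eta * x)) = expR (- (eta * P)) * (s + 1).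
  by rewrite /s subrK -expRD; congr expR; ring.
have Ey' : expR (- (eta * y)) = expR (- (eta * P)) * (1 + a * s) by rewrite Ey Hu; ring.
have Ht : expR (- (eta * (P - y))) * (1 + a * s) = 1.
  have -> : expR (- (eta * (P - y))) = expR (eta * y) * expR (- (eta * P)).
    by rewrite -expRD; congr expR; ring.
  by rewrite -mulrA -Ey' -expRD addrN expR0.
have Hg := expR_ge1Dx (- (eta * (P - y))).
have -> : a * s / (1 + a * s) = 1 - expR (- (eta * (P - y))).
  have -> : expR (- (eta * (P - y))) = (1 + a * s)^-1.
    by apply: (mulIf (negbT (gt_eqF h1))); rewrite Ht mulVf // (negbT (gt_eqF h1)).
  by field; rewrite gt_eqF.
lra.
Qed.

Lemma CL (R : realType) (eta p x0 x1 : R) (lam : lossmap R) :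
  is_loss lam -> Defs.proper lam -> 0 < eta -> eta_mixable eta lam -> 0 < p < 1 ->
  lam p false \is a fin_num -> lam p true \is a fin_num ->
  superpred lam (x0, x1) ->
  p * expR (eta * (fine (lam p true) - x1)) + (1 - p) * expR (eta * (fine (lam p false) - x0)) <= 1.
Proof.
move=> Hl Hp eta0 Hmix /andP[p0 p1] f0 f1 Hx.
have [Hge0 _] := Hl.
set P0 := fine (lam p false); set P1 := fine (lam p true).
have E0 : lam p false = P0%:E by rewrite fineK.
have E1 : lam p true = P1%:E by rewrite fineK.
have P00 : 0 <= P0 by apply: fine_ge0; apply: Hge0; rewrite ltW ?ltW.
have P10 : 0 <= P1 by apply: fine_ge0; apply: Hge0; rewrite ltW ?ltW.
have supP : superpred lam (P0, P1).
  split => //; split => //; exists p; rewrite E0 E1; split => //.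
  by rewrite !ltW.
set s0 := expR (eta * (P0 - x0)) - 1.
set s1 := expR (eta * (P1 - x1)) - 1.
suff : p * s1 + (1 - p) * s0 <= 0 by rewrite /s0 /s1; lra.
apply: alg_lemma; [exact: ltW|exact: ltW| rewrite /s0; have := expR_gt0 (eta * (P0 - x0)); lra
  | rewrite /s1; have := expR_gt0 (eta * (P1 - x1)); lra|].
move=> a a0 a12.
set u0 := expR (- (eta * x0)); set u1 := expR (- (eta * x1)).
set q0 := expR (- (eta * P0)); set q1 := expR (- (eta * P1)).
have := Hmix (u0, u1) (q0, q1) a.
case.
- by exists (x0, x1).
- by exists (P0, P1).
- apply/andP; split; lra.
move=> [y0 y1] [_ [_ [g [g01 [/= Hg0 /= Hg1]]]]] /= [Ey0 Ey1].
have Hpr : p * P1 + (1 - p) * P0 <= p * y1 + (1 - p) * y0.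
  have p01 : 0 <= p <= 1 by rewrite !ltW.
  have := Hp p g p01 g01.
  rewrite E0 E1 => H1.

  have H2 : ((p%:E * lam g true + (1 - p)%:E * lam g false) <= (p * y1 + (1 - p) * y0)%:E)%E.
    rewrite [X in (_ <= X)%E]EFinD [X in (_ <= X + _)%E]EFinM [X in (_ <= _ + X)%E]EFinM; apply: leeD; apply: lee_wpmul2l => //; rewrite lee_fin; lra.
  by rewrite -lee_fin; apply: le_trans H1 H2.
have B1 := step_b a0 a12 Ey1.
have B0 := step_b a0 a12 Ey0.
have C1 : p * (a * s1 / (1 + a * s1)) <= p * (eta * (P1 - y1)) by apply: ler_wpM2l => //; exact: ltW.
have C0 : (1 - p) * (a * s0 / (1 + a * s0)) <= (1 - p) * (eta * (P0 - y0)) by apply: ler_wpM2l => //; lra.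
have -> : 0 = eta * 0 :> R by rewrite mulr0.
have D : p * (eta * (P1 - y1)) + (1 - p) * (eta * (P0 - y0)) = eta * ((p * P1 + (1 - p) * P0) - (p * y1 + (1 - p) * y0)) by ring.
have : eta * ((p * P1 + (1 - p) * P0) - (p * y1 + (1 - p) * y0)) <= eta * 0 by apply: ler_wpM2l; [exact: ltW|lra].
lra.
Qed.

Definition Gf (R : realType) (g eta : R) (lam : lossmap R) (p : R) (b : bool) : R :=
  if lam g b == +oo%E then 0 else expR (eta * (fine (lam p b) - fine (lam g b))).

Lemma lam_cvg_within (R : realType) (lam : lossmap R) b (x : R) :
  is_loss lam -> 0 <= x <= 1 ->
  (fun p => lam p b) @ within `[0, 1] (nbhs x) --> lam x b.
Proof.
move=> [_ [Hc _]] x01.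
have := Hc b; move/subspace_continuousP; apply.
by rewrite /= in_itv.
Qed.

Lemma lam_cvg_int (R : realType) (lam : lossmap R) b (x : R) :
  is_loss lam -> 0 < x < 1 ->
  (fun p => lam p b) @ x --> lam x b.
Proof.
move=> Hl /andP[x0 x1].
have Hin : (`[0, 1]%classic : set R)° x.
  have : (`]0, 1[%classic : set R) `<=` (`[0, 1]%classic : set R)°.
    rewrite -open_subsetE; [exact: subset_itvW | exact: interval_open].
  apply; by rewrite /= in_itv /= x0 x1.
rewrite -(within_interior Hin).
by apply: lam_cvg_within => //; rewrite !ltW.
Qed.

Lemma Gf_cvg (R : realType) (g eta p0 : R) (lam : lossmap R) b (F : set_system R) {FF : Filter F} :
  (lam p0 b \is a fin_num \/ lam g b = +oo%E) -> (fun x => lam x b) @ F --> lam p0 b ->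
  (fun x => Gf g eta lam x b) @ F --> Gf g eta lam p0 b.
Proof.
rewrite /Gf; case: eqP => [_ _ _|cfin]; first exact: cvg_cst.
case=> [f|//] H.
rewrite -(fineK f) in H; move/fine_cvgP: H => [_ H].
apply: continuous_cvg; first exact: continuous_expR.
apply: cvgM; first exact: cvg_cst.
apply: cvgB; [exact: H|exact: cvg_cst].
Qed.

Lemma near_within01 (R : realType) (g : R) (P : R -> Prop) : 0 <= g <= 1 ->
  (\forall x \near within `[0, 1] (nbhs g), P x) ->
  exists x, [/\ 0 < x < 1, `|g - x| <= 1/4 & P x].
Proof.
move=> /andP[g0 g1] /nbhs_ballP [d d0 H].
set m := Order.min d (1/2) / 2.
have m0 : 0 < m by rewrite /m divr_gt0 // lt_min d0 /=; lra.
have md : m < d.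
  have : Order.min d (1/2) <= d by rewrite ge_min lexx.
  rewrite /m in m0 *; lra.
have m14 : m <= 1/4.
  have : Order.min d (1/2) <= 1/2 by rewrite ge_min lexx orbT.
  rewrite /m in m0 *; lra.
have [gs|gs] := lerP g (1/2).
- exists (g + m); split.
  + apply/andP; split; lra.
  + rewrite opprD addrA subrr add0r normrN ger0_norm; lra.
  + apply: H.
      rewrite -ball_normE /ball_ /= opprD addrA subrr add0r normrN ger0_norm //; lra.
    rewrite /= in_itv /=; apply/andP; split; lra.

- exists (g - m); split.
  + apply/andP; split; lra.
  + rewrite opprB addrC subrK ger0_norm; lra.
  + apply: H.
      rewrite -ball_normE /ball_ /= opprB addrC subrK ger0_norm //; lra.
    rewrite /= in_itv /=; apply/andP; split; lra.
Qed.

Lemma pos_oo (R : realType) (c : R) (y : \bar R) : 0 < c -> (0 <= y)%E ->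
  (c%:E * +oo + y = +oo)%E.
Proof. by move=> c0; rewrite gt0_muley ?lte_fin //; case: y. Qed.

Lemma pos_oo' (R : realType) (c : R) (y : \bar R) : 0 < c -> (0 <= y)%E ->
  (y + c%:E * +oo = +oo)%E.
Proof. by move=> c0; rewrite gt0_muley ?lte_fin //; case: y. Qed.

Lemma fin_ge0 (R : realType) (x : \bar R) : (0 <= x)%E -> x != +oo%E -> x \is a fin_num.
Proof. by case: x. Qed.

Lemma loss_fin_pt (R : realType) (lam : lossmap R) :
  is_loss lam -> exists g, 0 <= g <= 1 /\ lam g false \is a fin_num /\ lam g true \is a fin_num.
Proof. by case=> [_ [_ [H _]]]. Qed.

Lemma fin_int (R : realType) (lam : lossmap R) (p : R) b :
  is_loss lam -> Defs.proper lam -> 0 < p < 1 -> lam p b \is a fin_num.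
Proof.
move=> Hl Hp /andP[p0 p1].
have [g0 [g01 [f0 f1]]] := loss_fin_pt Hl.
have Hge0 := proj1 Hl.
have p01 : 0 <= p <= 1 by rewrite !ltW.
have H := Hp p g0 p01 g01.
have Hf : (p%:E * lam g0 true + (1 - p)%:E * lam g0 false)%E \is a fin_num.
  by rewrite fin_numD !fin_numM.
apply: fin_ge0; first exact: Hge0.
apply/negP => /eqP E.
case: b E => E; rewrite E in H.
- rewrite pos_oo // in H; last by apply: mule_ge0; [rewrite lee_fin; lra| exact: Hge0].
  by move: H; rewrite leye_eq => /eqP Hoo; rewrite Hoo in Hf.
- rewrite pos_oo' // in H; [|lra|by apply: mule_ge0; [rewrite lee_fin; lra| exact: Hge0]].
  by move: H; rewrite leye_eq => /eqP Hoo; rewrite Hoo in Hf.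
Qed.

Lemma end0 (R : realType) (lam : lossmap R) (g : R) :
  is_loss lam -> Defs.proper lam -> 0 <= g <= 1 ->
  lam 0 false \is a fin_num /\ (lam 0%R false <= lam g false)%E.
Proof.
move=> Hl Hp g01.
have H01 : 0 <= (0 : R) <= 1 by apply/andP; split; lra.
have le : forall g, 0 <= g <= 1 -> (lam 0%R false <= lam g false)%E.
  move=> h h01; have := Hp 0 h H01 h01.
  by rewrite !mul0e !add0e subr0 !mul1e.
split; last exact: le.
have [g0 [g01' [f0 f1]]] := loss_fin_pt Hl.
apply: fin_ge0; first by apply: (proj1 Hl).
apply/negP => /eqP E; have := le g0 g01'; rewrite E leye_eq => /eqP E'.
by rewrite E' in f0.
Qed.

Lemma end1 (R : realType) (lam : lossmap R) (g : R) :
  is_loss lam -> Defs.proper lam -> 0 <= g <= 1 ->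
  lam 1 true \is a fin_num /\ (lam 1%R true <= lam g true)%E.
Proof.
move=> Hl Hp g01.
have H01 : 0 <= (1 : R) <= 1 by apply/andP; split; lra.
have le : forall g, 0 <= g <= 1 -> (lam 1%R true <= lam g true)%E.
  move=> h h01; have := Hp 1 h H01 h01.
  by rewrite subrr !mul0e !adde0 !mul1e.
split; last exact: le.
have [g0 [g01' [f0 f1]]] := loss_fin_pt Hl.
apply: fin_ge0; first by apply: (proj1 Hl); apply/andP; split; lra.
apply/negP => /eqP E; have := le g0 g01'; rewrite E leye_eq => /eqP E'.
by rewrite E' in f1.
Qed.

Lemma G_ge0 (R : realType) (g eta : R) (lam : lossmap R) p b : 0 <= Gf g eta lam p b.
Proof. rewrite /Gf; case: eqP => _ //; exact: ltW (expR_gt0 _). Qed.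

Lemma G_end0 (R : realType) (g eta : R) (lam : lossmap R) :
  is_loss lam -> Defs.proper lam -> 0 < eta -> 0 <= g <= 1 -> Gf g eta lam 0 false <= 1.
Proof.
move=> Hl Hp eta0 g01; rewrite /Gf; case: eqP => [_|/eqP cn]; first exact: ler01.
have cf : lam g false \is a fin_num by apply: fin_ge0 => //; exact: (proj1 Hl).
have [f0 le] := end0 Hl Hp g01.
rewrite -expR0 ler_expR pmulr_rle0 // subr_le0.
exact: fine_le.
Qed.

Lemma G_end1 (R : realType) (g eta : R) (lam : lossmap R) :
  is_loss lam -> Defs.proper lam -> 0 < eta -> 0 <= g <= 1 -> Gf g eta lam 1 true <= 1.
Proof.
move=> Hl Hp eta0 g01; rewrite /Gf; case: eqP => [_|/eqP cn]; first exact: ler01.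
have cf : lam g true \is a fin_num by apply: fin_ge0 => //; exact: (proj1 Hl).
have [f0 le] := end1 Hl Hp g01.
rewrite -[X in _ <= X]expR0 ler_expR pmulr_rle0 // subr_le0.
exact: fine_le.
Qed.

Lemma le1_of (R : realType) (X k : R) : 0 < k -> (forall e, 0 < e -> X <= expR (k * e)) -> X <= 1.
Proof.
move=> k0 H; rewrite leNgt; apply/negP => X1.
set t := (X - 1) / (2 * X).
have X0 : 0 < X by lra.
have t0 : 0 < t by rewrite /t divr_gt0 //; lra.
have t1 : t < 1/2.
  rewrite /t ltr_pdivrMr; last lra.
  lra.
have := H (t / k) (divr_gt0 t0 k0).
rewrite mulrC divfK ?gt_eqF // => HX.
have He := expR_ge1Dx (- t).
have Hp : expR t * expR (- t) = 1 by rewrite -expRD addrN expR0.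
have : X * (1 - t) <= 1.
  apply: le_trans (_ : expR t * (1 - t) <= 1).
    by apply: ler_wpM2r => //; lra.
  rewrite -Hp; apply: ler_wpM2l; first exact: ltW (expR_gt0 _).
  lra.
have -> : X * (1 - t) = (X + 1) / 2.
  by rewrite /t; field; rewrite gt_eqF.
lra.
Qed.

Lemma approx_lt (R : realType) (lam : lossmap R) b (g C e : R) :
  is_loss lam -> 0 <= g <= 1 -> lam g b = C%:E -> 0 < e ->
  exists x, [/\ 0 < x < 1, `|g - x| <= 1/4 & (lam x b < (C + e)%:E)%E].
Proof.
move=> Hl g01 Eg e0.
have H := @lam_cvg_within R lam b g Hl g01; rewrite Eg in H.
move/fine_cvgP: H => [Hfin Hc].
have Hlt := cvgr_lt C Hc (C + e) (ltac:(rewrite ltrDl; exact: e0)).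
apply: near_within01 => //.
near=> x.
have hf : lam x b \is a fin_num by near: x; exact: Hfin.
have hl : fine (lam x b) < C + e by near: x; exact: Hlt.
by rewrite -(fineK hf) lte_fin.
Unshelve. all: by end_near.
Qed.

Lemma P4 (R : realType) (g eta p : R) (lam : lossmap R) :
  is_loss lam -> Defs.proper lam -> 0 < eta -> eta_mixable eta lam -> 0 <= g <= 1 -> 0 < p < 1 ->
  p * Gf g eta lam p true + (1 - p) * Gf g eta lam p false <= 1.
Proof.
move=> Hl Hp eta0 Hmix g01 pint.
have fp0 := fin_int false Hl Hp pint.
have fp1 := fin_int true Hl Hp pint.
have Hge0 := proj1 Hl.
have nboth := proj2 (proj2 (proj2 Hl)).
have [p0 p1] : 0 < p /\ p < 1 by case/andP: pint.
rewrite /Gf; case: eqP => [c1oo|/eqP c1]; case: eqP => [c0oo|/eqP c0].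
- by exfalso; apply: nboth; exists g.
- rewrite mulr0 add0r; apply: (le1_of eta0) => e e0.
  have cf0 : lam g false \is a fin_num by apply: fin_ge0 => //; exact: Hge0.
  set C0 := fine (lam g false).
  have Eg : lam g false = C0%:E by rewrite fineK.
  have [x [xint _ hx]] := approx_lt Hl g01 Eg e0.
  have fx1 := fin_int true Hl Hp xint.
  have Hs : superpred lam (C0 + e, fine (lam x true)).
    have C0ge : 0 <= C0 by exact: fine_ge0 (Hge0 g false g01).
    split; first by rewrite /=; lra.
    have x01 : 0 <= x <= 1 by case/andP: xint => ? ?; rewrite !ltW.
    split; first by rewrite /=; exact: fine_ge0 (Hge0 x true x01).
    exists x; split; first exact: x01.
    by rewrite fineK //= (ltW hx).
  have := CL Hl Hp eta0 Hmix pint fp0 fp1 Hs.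
  have := ltW (expR_gt0 (eta * (fine (lam p true) - fine (lam x true)))).
  have -> : expR (eta * (fine (lam p false) - C0)) =
            expR (eta * (fine (lam p false) - (C0 + e))) * expR (eta * e).
    by rewrite -expRD; congr expR; ring.
  move=> h1 H.
  rewrite mulrA -[X in _ <= X]mul1r; apply: ler_wpM2r; first exact: ltW (expR_gt0 _).
  have : 0 <= p * expR (eta * (fine (lam p true) - fine (lam x true))) by apply: mulr_ge0 => //; lra.
  lra.
- rewrite mulr0 addr0; apply: (le1_of eta0) => e e0.
  have cf1 : lam g true \is a fin_num by apply: fin_ge0 => //; exact: Hge0.
  set C1 := fine (lam g true).
  have Eg : lam g true = C1%:E by rewrite fineK.
  have [x [xint _ hx]] := approx_lt Hl g01 Eg e0.
  have fx0 := fin_int false Hl Hp xint.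
  have Hs : superpred lam (fine (lam x false), C1 + e).
    have x01 : 0 <= x <= 1 by case/andP: xint => ? ?; rewrite !ltW.
    split; first by rewrite /=; exact: fine_ge0 (Hge0 x false x01).
    have C1ge : 0 <= C1 by exact: fine_ge0 (Hge0 g true g01).
    split; first by rewrite /=; lra.
    exists x; split; first exact: x01.
    by rewrite fineK //= (ltW hx).
  have := CL Hl Hp eta0 Hmix pint fp0 fp1 Hs.
  have := ltW (expR_gt0 (eta * (fine (lam p false) - fine (lam x false)))).
  have -> : expR (eta * (fine (lam p true) - C1)) =
            expR (eta * (fine (lam p true) - (C1 + e))) * expR (eta * e).
    by rewrite -expRD; congr expR; ring.
  move=> h1 H.
  rewrite mulrA -[X in _ <= X]mul1r; apply: ler_wpM2r; first exact: ltW (expR_gt0 _).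
  have : 0 <= (1 - p) * expR (eta * (fine (lam p false) - fine (lam x false))) by apply: mulr_ge0 => //; lra.
  lra.
- have cf0 : lam g false \is a fin_num by apply: fin_ge0 => //; exact: Hge0.
  have cf1 : lam g true \is a fin_num by apply: fin_ge0 => //; exact: Hge0.
  apply: CL => //.
  split; first exact: fine_ge0 (Hge0 g false g01).
  split; first exact: fine_ge0 (Hge0 g true g01).
  by exists g; rewrite /= !fineK.
Qed.

Definition SG (R : realType) N (w : 'I_N -> R) (m : experts_move R N) (p : R) (b : bool) : R :=
  \sum_(n < N) w n * Gf (m n).1.1 (m n).1.2 (m n).2 p b.

Definition valid (R : realType) N (m : experts_move R N) : Prop :=
  forall n, 0 <= (m n).1.1 <= 1 /\ 0 < (m n).1.2 /\ in_L (m n).2 /\ eta_mixable (m n).1.2 (m n).2.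

Definition Good (R : realType) N (w : 'I_N -> R) (m : experts_move R N) (p : R) : Prop :=
  0 <= p <= 1 /\ forall b, SG w m p b <= \sum_(n < N) w n /\
    (forall n, 0 < w n -> (m n).2 (m n).1.1 b != +oo%E -> (m n).2 p b != +oo%E).

Lemma SG_int (R : realType) N (w : 'I_N -> R) (m : experts_move R N) (p : R) :
  valid m -> (forall n, 0 <= w n) -> 0 < p < 1 ->
  p * SG w m p true + (1 - p) * SG w m p false <= \sum_(n < N) w n.
Proof.
move=> Hv Hw pint; rewrite /SG !mulr_sumr -big_split; apply: ler_sum => n _.
have [g01 [eta0 [[Hl [_ Hp]] Hmix]]] := Hv n.
have := P4 Hl Hp eta0 Hmix g01 pint.
set G1 := Gf _ _ _ p true; set G0 := Gf _ _ _ p false => H.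
rewrite /=.
have -> : p * (w n * G1) + (1 - p) * (w n * G0) = w n * (p * G1 + (1 - p) * G0) by ring.
by rewrite -[X in _ <= X]mulr1; apply: ler_wpM2l.
Qed.

Lemma SG_cvg (R : realType) N (w : 'I_N -> R) (m : experts_move R N) (e : R) b
    (F : set_system R) {FF : Filter F} :
  (forall n, 0 <= w n) ->
  (forall n, 0 < w n -> (m n).2 e b \is a fin_num \/ (m n).2 (m n).1.1 b = +oo%E) ->
  (forall n, 0 < w n -> (fun x => (m n).2 x b) @ F --> (m n).2 e b) ->
  (fun p => SG w m p b) @ F --> SG w m e b.
Proof.
move=> Hw Hf Hc; rewrite /SG.
apply: cvg_big; first exact: add_continuous.
move=> n _.
have := Hw n; rewrite le_eqVlt => /predU1P[w0|wp].
  rewrite -w0 mul0r.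
  have -> : (fun x => 0 * Gf (m n).1.1 (m n).1.2 (m n).2 x b) = (fun _ => 0).
    by apply: funext => x; rewrite mul0r.
  exact: cvg_cst.
apply: cvgM; first exact: cvg_cst.
apply: Gf_cvg; [exact: Hf|exact: Hc].
Qed.

Lemma fin_noo (R : realType) (x : \bar R) : x \is a fin_num -> x != +oo%E.
Proof. by case: x. Qed.

Lemma lsc (R : realType) N (w : 'I_N -> R) (m : experts_move R N) (e : R) b :
  valid m -> (forall n, 0 <= w n) -> 0 <= e <= 1 ->
  (\sum_(n < N) w n < SG w m e b \/
    exists n, [/\ 0 < w n, (m n).2 (m n).1.1 b != +oo%E & (m n).2 e b = +oo%E]) ->
  exists x, [/\ 0 < x < 1, `|e - x| <= 1/4 & \sum_(n < N) w n < SG w m x b].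
Proof.
move=> Hv Hw e01.
set W := \sum_(n < N) w n.
case: (pselect (exists n, [/\ 0 < w n, (m n).2 (m n).1.1 b != +oo%E & (m n).2 e b = +oo%E])).
- move=> [n [wn cn le]] _.
  have [g01 [eta0 [[Hl [_ Hp]] Hmix]]] := Hv n.
  have Hc := @lam_cvg_within R (m n).2 b e Hl e01; rewrite le in Hc.
  move/cvgeyPgt: Hc => Hc.
  have cf : (m n).2 (m n).1.1 b \is a fin_num by apply: fin_ge0 => //; exact: (proj1 Hl).
  set C := fine ((m n).2 (m n).1.1 b).
  set eta := (m n).1.2.
  set A := C + (W / w n + 1) / eta.
  have [x [xint xe hx]] := near_within01 e01 (Hc A).
  exists x; split => //.
  have fx := fin_int b Hl Hp xint.
  rewrite -(fineK fx) lte_fin in hx.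
  have W0 : 0 <= W by apply: sumr_ge0 => i _; exact: Hw.
  rewrite /SG (bigD1 n) //=.
  have Hr : 0 <= \sum_(i < N | i != n) w i * Gf (m i).1.1 (m i).1.2 (m i).2 x b.
    by apply: sumr_ge0 => i _; apply: mulr_ge0; [exact: Hw|exact: G_ge0].
  suff : W < w n * Gf (m n).1.1 (m n).1.2 (m n).2 x b by lra.
  rewrite /Gf (negbTE cn) -/C -/eta.
  set L := fine ((m n).2 x b) in hx *.
  have H1 := expR_ge1Dx (eta * (L - C)).
  have H2 : W / w n + 1 < eta * (L - C).
    have -> : W / w n + 1 = eta * (A - C) by rewrite /A addrAC subrr add0r mulrCA divff ?gt_eqF // mulr1.
    by rewrite ltr_pM2l //; lra.
  have H3 : W < w n * (W / w n + 1).
    by rewrite mulrDr mulrCA divff ?gt_eqF // !mulr1; lra.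
  apply: (lt_le_trans H3); apply: ler_wpM2l; [exact: ltW|lra].
- move=> nex [H|H]; last by exfalso; apply: nex.
  have Hcv : (fun p => SG w m p b) @ within `[0, 1] (nbhs e) --> SG w m e b.
    apply: SG_cvg => //.
      move=> n wn.
      have [g01 [eta0 [[Hl [_ Hp]] Hmix]]] := Hv n.
      case: (eqVneq ((m n).2 (m n).1.1 b) +oo%E) => [->|cn]; first by right.
      left; apply: fin_ge0; first exact: (proj1 Hl).
      by apply/negP => /eqP E; apply: nex; exists n; split.
    move=> n _; have [g01 [eta0 [[Hl _] _]]] := Hv n.
    exact: lam_cvg_within.
  exact: near_within01 e01 (cvgr_gt _ Hcv W H).
Qed.

Lemma DF (R : realType) N (w : 'I_N -> R) (m : experts_move R N) :
  valid m -> (forall n, 0 <= w n) -> exists p, Good w m p.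
Proof.
move=> Hv Hw.
set W := \sum_(n < N) w n.
have e0 : 0 <= (0 : R) <= 1 by apply/andP; split; lra.
have e1 : 0 <= (1 : R) <= 1 by apply/andP; split; lra.
have G0f : SG w m 0 false <= W /\
    (forall n, 0 < w n -> (m n).2 (m n).1.1 false != +oo%E -> (m n).2 0 false != +oo%E).
  split.
    rewrite /SG /W; apply: ler_sum => n _.
    have [g01 [eta0 [[Hl [_ Hp]] Hmix]]] := Hv n.
    rewrite -[X in _ <= X]mulr1; apply: ler_wpM2l; first exact: Hw.
    exact: G_end0.
  move=> n _ _; have [g01 [eta0 [[Hl [_ Hp]] Hmix]]] := Hv n.
  exact: fin_noo (proj1 (end0 Hl Hp g01)).
have G1t : SG w m 1 true <= W /\
    (forall n, 0 < w n -> (m n).2 (m n).1.1 true != +oo%E -> (m n).2 1 true != +oo%E).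
  split.
    rewrite /SG /W; apply: ler_sum => n _.
    have [g01 [eta0 [[Hl [_ Hp]] Hmix]]] := Hv n.
    rewrite -[X in _ <= X]mulr1; apply: ler_wpM2l; first exact: Hw.
    exact: G_end1.
  move=> n _ _; have [g01 [eta0 [[Hl [_ Hp]] Hmix]]] := Hv n.
  exact: fin_noo (proj1 (end1 Hl Hp g01)).
case: (pselect (W < SG w m 0 true \/
    exists n, [/\ 0 < w n, (m n).2 (m n).1.1 true != +oo%E & (m n).2 0 true = +oo%E])) => hA; last first.
  exists 0; split => //; case; last exact: G0f.
  split; first by rewrite leNgt; apply/negP => H; apply: hA; left.
  move=> n wn cn; apply/negP => /eqP E; apply: hA; right; by exists n; split.
case: (pselect (W < SG w m 1 false \/
    exists n, [/\ 0 < w n, (m n).2 (m n).1.1 false != +oo%E & (m n).2 1 false = +oo%E])) => hB; last first.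
  exists (1 : R); split => //; case; first exact: G1t.
  split; first by rewrite leNgt; apply/negP => H; apply: hB; left.
  move=> n wn cn; apply/negP => /eqP E; apply: hB; right; by exists n; split.
have [a [aint ae ha]] := lsc Hv Hw e0 hA.
have [b [bint be hb]] := lsc Hv Hw e1 hB.
have [a0 a1] : 0 < a /\ a < 1 by case/andP: aint.
have [b0 b1] : 0 < b /\ b < 1 by case/andP: bint.
have a14 : a <= 1/4 by move: ae; rewrite sub0r normrN gtr0_norm.
have b34 : 3/4 <= b by move: be; rewrite gtr0_norm ?subr_gt0 //; lra.
set h := fun x => SG w m x true - SG w m x false.
have ha' : 0 < h a.
  have := SG_int Hv Hw aint; rewrite /h.
  move: ha; set S1 := SG w m a true; set S0 := SG w m a false => ha Hi.
  rewrite -/W in ha Hi.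
  have : (1 - a) * S0 < (1 - a) * W.
    have : a * W < a * S1 by rewrite ltr_pM2l.
    have -> : (1 - a) * W = W - a * W by ring.
    lra.
  rewrite ltr_pM2l; lra.
have hb' : h b < 0.
  have := SG_int Hv Hw bint; rewrite /h.
  move: hb; set S1 := SG w m b true; set S0 := SG w m b false => hb Hi.
  rewrite -/W in hb Hi.
  have : b * S1 < b * W.
    have : (1 - b) * W < (1 - b) * S0 by rewrite ltr_pM2l //; lra.
    have -> : (1 - b) * W = W - b * W by ring.
    lra.
  rewrite ltr_pM2l; lra.
have ab : a <= b by lra.
have cont : {within `[a, b], continuous h}.
  apply: continuous_in_subspaceT => x.
  rewrite inE /= in_itv /= => /andP[xa xb].
  have xint : 0 < x < 1 by apply/andP; split; lra.
  apply: cvgB; apply: SG_cvg => //.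
  - move=> n _; left; have [g01 [eta0 [[Hl [_ Hp]] Hmix]]] := Hv n; exact: fin_int.
  - move=> n _; have [g01 [eta0 [[Hl _] _]]] := Hv n; exact: lam_cvg_int.
  - move=> n _; left; have [g01 [eta0 [[Hl [_ Hp]] Hmix]]] := Hv n; exact: fin_int.
  - move=> n _; have [g01 [eta0 [[Hl _] _]]] := Hv n; exact: lam_cvg_int.
have [c cin hc] := @IVT R h a b 0 ab cont (ltac:(rewrite ge_min le_max; apply/andP; split; apply/orP; [right|left]; exact: ltW)).
move: cin; rewrite in_itv /= => /andP[ca cb].
have cint : 0 < c < 1 by apply/andP; split; lra.
have := SG_int Hv Hw cint.
move: hc; rewrite /h => /eqP; rewrite subr_eq0 => /eqP Heq.
rewrite Heq => Hi.
exists c; split; first by apply/andP; split; lra.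
move=> bb; split.
  by case: bb; rewrite ?Heq; lra.
move=> n _ _; have [g01 [eta0 [[Hl [_ Hp]] Hmix]]] := Hv n.
exact: fin_noo (fin_int bb Hl Hp cint).
Qed.

Definition choosep (R : realType) N (w : 'I_N -> R) (m : experts_move R N) : R :=
  xget 0 (Good w m).

Fixpoint Wt (R : realType) N (rh : seq (experts_move R N * bool)) : 'I_N -> R :=
  match rh with
  | [::] => fun _ => 1
  | (m, b) :: rh' => fun n => Wt rh' n * Gf (m n).1.1 (m n).1.2 (m n).2 (choosep (Wt rh') m) b
  end.

Definition Strat (R : realType) N : strategy R N := fun h m => choosep (Wt (rev h)) m.

Lemma choosep01 (R : realType) N (w : 'I_N -> R) (m : experts_move R N) :
  0 <= choosep w m <= 1.
Proof.
rewrite /choosep; case: (pselect (exists p, Good w m p)) => [ex|nex].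
  by case: (xgetPex 0 ex).
rewrite xgetPN; first by apply/andP; split; lra.
by move=> x gx; apply: nex; exists x.
Qed.

Lemma choosep_good (R : realType) N (w : 'I_N -> R) (m : experts_move R N) :
  valid m -> (forall n, 0 <= w n) -> Good w m (choosep w m).
Proof. by move=> Hv Hw; rewrite /choosep; apply: xgetPex; exact: DF. Qed.

Theorem theorem2 (R : realType) (N : nat) :
  exists S : strategy R N,
    (forall h m, 0 <= S h m <= 1) /\
    forall (gam eta : nat -> 'I_N -> R) (lam : nat -> 'I_N -> lossmap R)
           (om : nat -> bool),
      (forall t n, 0 <= gam t n <= 1) ->
      (forall t n, 0 < eta t n) ->
      (forall t n, in_L (lam t n)) ->
      (forall t n, eta_mixable (eta t n) (lam t n)) ->
      let mv : nat -> experts_move R N :=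
        fun t n => (gam t n, eta t n, lam t n) in
      let pi : nat -> R :=
        fun t => S [seq (mv s, om s) | s <- iota 0 t] (mv t) in
      forall (T : nat) (n : 'I_N), (0 < T)%N ->
        (\sum_(0 <= t < T)
            ((eta t n)%:E * (lam t n (pi t) (om t) - lam t n (gam t n) (om t)))
         <= (ln N%:R)%:E)%E.
Proof.
exists (@Strat R N); split; first by move=> h m; exact: choosep01.
move=> gam eta lam om Hg He HL Hm mv pi T n _.
set w := fun t => Wt (rev [seq (mv s, om s) | s <- iota 0 t]).
have Hv : forall t, valid (mv t) by move=> t k; rewrite /mv /=; split => //; split => //; split.
have wS : forall t k, w t.+1 k = w t k * Gf (gam t k) (eta t k) (lam t k) (pi t) (om t).
  move=> t k; rewrite /w -addn1 iotaD map_cat rev_cat /=.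
  by [].
set sm := fun T k => (\sum_(0 <= t < T)
            ((eta t k)%:E * (lam t k (pi t) (om t) - lam t k (gam t k) (om t))))%E.
have Inv : forall T, [/\ (forall k, 0 <= w T k), \sum_(k < N) w T k <= N%:R &
   forall k, (w T k = 0 /\ sm T k = -oo%E) \/ (0 < w T k /\ sm T k = (ln (w T k))%:E)].
  elim => [|t [Hw0 Hsum Hk]].
    split.
    - by move=> k; rewrite /w /=.
    - by rewrite /w /= sumr_const card_ord.
    - by move=> k; right; rewrite /w /= ln1 /sm big_geq.
  have Hgood : Good (w t) (mv t) (pi t) by apply: choosep_good.
  have [_ Hgb] := Hgood.
  have [HS Hfin] := Hgb (om t).
  split.
  - by move=> k; rewrite wS; apply: mulr_ge0; [exact: Hw0|exact: G_ge0].
  - apply: le_trans Hsum; apply: le_trans HS.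
    by rewrite /SG le_eqVlt; apply/orP; left; apply/eqP; apply: eq_bigr => k _; rewrite wS.
  move=> k.
  have smS : sm t.+1 k = (sm t k + (eta t k)%:E * (lam t k (pi t) (om t) - lam t k (gam t k) (om t)))%E.
    by rewrite /sm big_nat_recr.
  have [[wk0 smk]|[wkp smk]] := Hk k.
    left; split; first by rewrite wS wk0 mul0r.
    by rewrite smS smk addNye.
  have [Hl [_ Hp]] := HL t k.
  case: (eqVneq (lam t k (gam t k) (om t)) +oo%E) => [coo|cn].
    left; split; first by rewrite wS /Gf coo eqxx mulr0.
    by rewrite smS coo addeNy gt0_muleNy ?lte_fin // addeNy.
  have pn : lam t k (pi t) (om t) != +oo%E by exact: Hfin k wkp cn.
  have pi01 : 0 <= pi t <= 1 by exact: choosep01.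
  have fp : lam t k (pi t) (om t) \is a fin_num by apply: fin_ge0 => //; exact: (proj1 Hl).
  have fc : lam t k (gam t k) (om t) \is a fin_num by apply: fin_ge0 => //; exact: (proj1 Hl).
  set tt := eta t k * (fine (lam t k (pi t) (om t)) - fine (lam t k (gam t k) (om t))).
  have Gv : Gf (gam t k) (eta t k) (lam t k) (pi t) (om t) = expR tt by rewrite /Gf (negbTE cn).
  right; split; first by rewrite wS Gv; apply: mulr_gt0 => //; exact: expR_gt0.
  rewrite smS smk wS Gv lnM ?posrE ?expR_gt0 // expRK.
  by rewrite -(fineK fp) -(fineK fc) -EFinB -EFinM -EFinD.
change (sm T n <= (ln N%:R)%:E)%E.
have [_ Hsum Hk] := Inv T.
have [[_ ->]|[wkp ->]] := Hk n; first exact: leNye.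
rewrite lee_fin.
have Hw0 := (let: And3 a _ _ := Inv T in a).
have wle : w T n <= \sum_(k < N) w T k.
  by rewrite (bigD1 n) //= lerDl; apply: sumr_ge0 => i _; exact: Hw0.
have N0 : 0 < N%:R :> R by apply: lt_le_trans wkp (le_trans wle Hsum).
by rewrite ler_ln ?posrE //; apply: le_trans wle Hsum.
Qed.
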